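(* Let $X_1,X_2,Y$ be cellular spaces with $X_1,X_2$ compact, let $r\ge0$, and let $a_i\colon X_i\to Y$, $i=1,2$, be maps such that the constant map $X_i\to Y$ is strongly $r$-similar to $a_i$. Then the constant map $X_1\vee X_2\to Y$ is strongly $r$-similar to $a_1\,\bar\vee\,a_2\colon X_1\vee X_2\to Y$ (the map restricting to $a_i$ on $X_i$).
   Context: Cellular space = based CW complex; maps based. Strong similarity: $\langle W\rangle$ = free abelian group on a set $W$. $Y^X$ = based maps (compact-open), based at the constant map; $Y^X_a$ = path component of $a$; $V\mapsto V|_R$ restriction; $\mathcal F_n(X)$ = finite $R\subseteq X$ containing the basepoint with $|R|\le n+1$; $\langle Y^X\rangle^{(s)}=\{V:V|_R=0\ \forall R\in\mathcal F_{s-1}(X)\}$. For unbased $U,V$: $V^{(U)}$ = unbased maps; $\Xi^U(v)$ = constant map at $v$; for $U=\coprod_iU_i$ the combining product $\boxed{\sqcup}_i\langle w_i\rangle=\langle w\rangle$, $w|_{U_i}=w_i$, multilinear. For nonempty finite $E$: simplex $\Delta E$, faces $\Delta F$; layouts = sets $A$ of pairwise disjoint nonempty subsets; $\Delta[A]=\coprod_{F\in A}\Delta F$; $S\in\langle V^{(\Delta E)}\rangle$ fissile if $S|_{\Delta[A]}=\boxed{\sqcup}_{F\in A}S|_{\Delta F}$ for all layouts. $U\wr X=(U\times X)/(U\times\{x_0\})$, $\#^X(w)(u\wr x)=w(u)(x)$, $\langle (Y^X)^{(U)}\rangle^{(s)}_X=\langle\#^X\rangle^{-1}\langle Y^{U\wr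 X}\rangle^{(s)}$. $a\overset{r}{\approx}b$ iff for each nonempty finite $E$ there is a fissile $S\in\langle (Y^X_a)^{(\Delta E)}\rangle$ with $\langle\Xi^{\Delta E}(b)\rangle-S\in\langle (Y^X)^{(\Delta E)}\rangle^{(r+1)}_X$. *)

(* Defs.v *)
From HB Require Import structures.
From mathcomp Require Import all_boot all_order all_algebra finmap.
From mathcomp Require Import all_classical all_reals topology normedtype homotopy.
From mathcomp Require Import Rstruct Rstruct_topology.

Set Implicit Arguments.
Unset Strict Implicit.
Unset Printing Implicit Defensive.

Import Order.TTheory GRing.Theory Num.Theory.
Local Open Scope classical_set_scope.
Local Open Scope ring_scope.

Notation RR := Rdefinitions.R.

Definition sqnorm n (v : 'rV[RR]_n) : RR := \sum_(i < n) v ord0 i ^+ 2.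
Definition cdisk n : set 'rV[RR]_n := [set v | sqnorm v <= 1].
Definition odisk n : set 'rV[RR]_n := [set v | sqnorm v < 1].
Definition sphere n : set 'rV[RR]_n := [set v | sqnorm v = 1].
Arguments cdisk : clear implicits.
Arguments odisk : clear implicits.
Arguments sphere : clear implicits.

Definition ocell (X : topologicalType) (I : Type) (dim : I -> nat)
  (phi : forall i, 'rV[RR]_(dim i) -> X) (i : I) : set X :=
  phi i @` odisk (dim i).
Definition ccell (X : topologicalType) (I : Type) (dim : I -> nat)
  (phi : forall i, 'rV[RR]_(dim i) -> X) (i : I) : set X :=
  phi i @` cdisk (dim i).

Definition CW_structure (X : topologicalType) (I : Type) (dim : I -> nat)
    (phi : forall i, 'rV[RR]_(dim i) -> X) : Prop :=
  (
      (forall i, {within cdisk (dim i), continuous (phi i)}) /\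
      (forall x : X, exists! i, ocell phi i x) /\
      (* phi_i restricted to the open disk is a homeomorphism onto e_i *)
      (forall i u v, odisk (dim i) u -> odisk (dim i) v ->
          phi i u = phi i v -> u = v) /\
      (forall i (U : set 'rV[RR]_(dim i)), open U ->
          exists V : set X, open V /\
            phi i @` (U `&` odisk (dim i)) = V `&` ocell phi i) /\
      (forall i, phi i @` sphere (dim i) `<=`
          \bigcup_(j in [set j | (dim j < dim i)%N]) ocell phi j) /\
      (forall i, finite_set [set j | ccell phi i `&` ocell phi j !=set0]) /\
      (forall A : set X, (forall i, closed (A `&` ccell phi i)) -> closed A)).

Definition cellular (X : ptopologicalType) : Prop :=
  hausdorff_space X /\
  exists (I : Type) (dim : I -> nat) (phi : forall i, 'rV[RR]_(dim i) -> X),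
    CW_structure phi /\ exists i, dim i = 0%N /\ ocell phi i (@point X).

Definition based_map (X Y : ptopologicalType) (f : X -> Y) : Prop :=
  continuous f /\ f (@point X) = @point Y.

Definition cstmap (X Y : ptopologicalType) : X -> Y := fun _ => @point Y.
Arguments cstmap : clear implicits.

Definition path_comp (X Y : ptopologicalType) (a : X -> Y) : set (X -> Y) :=
  [set f | exists g : RR -> {compact-open, X -> Y},
     [/\ {within `[0, 1]%classic, continuous g}, g 0 = a, g 1 = f &
         forall t, `[0, 1]%classic t -> based_map (g t)]].

(* Free abelian groups <W>: an element is represented by a finite formal    *)
(* sum, i.e. a list of (coefficient, generator).  Generators are compared   *)
(* through a relation P (e.g. "agree on the subset U" for maps U -> V,      *)
(* which are represented by functions on an ambient type).                  *)
Definition coef (T G : Type) (P : T -> G -> Prop) (s : seq (int * T)) (g : G)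
  : int := \sum_(p <- s) (if `[< P p.2 g >] then p.1 else 0).

Definition fs_eq (T G : Type) (P : T -> G -> Prop) (s1 s2 : seq (int * T)) :=
  forall g, coef P s1 g = coef P s2 g.

Definition fs_neg (T : Type) (s : seq (int * T)) : seq (int * T) :=
  [seq (- p.1, p.2) | p <- s].

Definition agree_on (A B : Type) (U : set A) (w g : A -> B) : Prop :=
  forall t, U t -> w t = g t.

Definition Simp (E : finType) := {ptws E -> RR}.

Definition simplex (E : finType) : set (Simp E) :=
  [set t | (forall e, 0 <= t e) /\ \sum_(e : E) t e = 1].

Definition face (E : finType) (F : {set E}) : set (Simp E) :=
  [set t | simplex t /\ forall e, e \notin F -> t e = 0].

Definition layout_space (E : finType) (A : {set {set E}}) : set (Simp E) :=
  \bigcup_(F in [set F | F \in A]) face F.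

Definition layout (E : finType) (A : {set {set E}}) : Prop :=
  (forall F, F \in A -> F != finset.set0) /\
  (forall F G, F \in A -> G \in A -> F != G -> F :&: G = finset.set0).

(* the combining product  boxed-sqcup_{F in A} (s restricted to Delta F),
   computed on generators and extended multilinearly: a generator of the
   product is the map on Delta[A] which is the chosen map on each Delta F. *)
Definition glue (E : finType) (V : Type) (F : {set E}) (f h : Simp E -> V)
  : Simp E -> V := fun t => if `[< face F t >] then f t else h t.

Definition combine (E : finType) (V : Type) (v0 : V) (A : {set {set E}})
    (s : seq (int * (Simp E -> V))) : seq (int * (Simp E -> V)) :=
  foldr (fun F acc => [seq (p.1 * q.1, glue F p.2 q.2) | p <- s, q <- acc])
        [:: (1, fun _ => v0)] (enum A).

Definition fissile (E : finType) (V : Type) (v0 : V)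
    (s : seq (int * (Simp E -> V))) : Prop :=
  forall A : {set {set E}}, layout A ->
    fs_eq (agree_on (layout_space A)) s (combine v0 A s).

(* The filtration  <(Y^X)^(Delta E)>^(s)_X = <#^X>^{-1} <Y^(Delta E wr X)>^(s) *)
(* A point of Delta E wr X = (Delta E x X)/(Delta E x {x0}) is represented  *)
(* by a pair (u, x); a set R in F_(s-1)(Delta E wr X) is the basepoint      *)
(* together with the classes of a list q of at most s-1 pairs.  Since all   *)
(* maps involved are based, #^X(w) takes value y0 at the basepoint, so the  *)
(* restriction to R is determined by the values w(u)(x), (u,x) in q.        *)
Definition wr_agree (E : finType) (X Y : Type) (q : seq (Simp E * X))
    (w : Simp E -> X -> Y) (g : Simp E * X -> Y) : Prop :=
  forall j, List.In j q -> w j.1 j.2 = g j.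

Definition in_filtration (E : finType) (X Y : Type) (k : nat)
    (s : seq (int * (Simp E -> X -> Y))) : Prop :=
  forall q : seq (Simp E * X), (size q < k)%N ->
    (forall j, List.In j q -> simplex j.1) ->
    forall g : Simp E * X -> Y, coef (wr_agree q) s g = 0.

Definition simplex_map_into (E : finType) (X Y : ptopologicalType)
    (a : X -> Y) (w : Simp E -> {compact-open, X -> Y}) : Prop :=
  {within @simplex E, continuous w} /\
  forall t, simplex t -> path_comp a (w t).

Definition strongly_similar (X Y : ptopologicalType) (r : nat) (a b : X -> Y)
  : Prop :=
  forall E : finType, (0 < #|E|)%N ->
    exists s : seq (int * (Simp E -> {compact-open, X -> Y})),
      [/\ (forall p, List.In p s -> simplex_map_into a p.2),
          fissile (cstmap X Y : {compact-open, X -> Y}) s &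
          in_filtration (r.+1)
            ((1, fun _ => (b : {compact-open, X -> Y})) :: fs_neg s)].

Definition wedge2 (X1 X2 : ptopologicalType) : ptopologicalType :=
  pwedge (fun b : bool => if b then X1 else X2).

(* Main.v *)
Require Import Defs.
From HB Require Import structures.
From mathcomp Require Import all_boot all_order all_algebra finmap.
From mathcomp Require Import all_classical all_reals topology normedtype homotopy.
From mathcomp Require Import Rstruct Rstruct_topology.
From mathcomp Require Import ring.
Set Implicit Arguments.
Unset Strict Implicit.
Unset Printing Implicit Defensive.
Import Order.TTheory GRing.Theory Num.Theory.
Local Open Scope classical_set_scope.
Local Open Scope ring_scope.

Definition wjoin (X1 X2 Y : ptopologicalType) (f1 : X1 -> Y) (f2 : X2 -> Y)
  : wedge2 X1 X2 -> Y :=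
  wedge_fun (fun b => if b return ((if b then X1 else X2) -> Y) then f1 else f2).

Lemma wjoin_liftT (X1 X2 Y : ptopologicalType) (f1 : X1 -> Y) (f2 : X2 -> Y) (y : X1) :
  f1 point = f2 point -> wjoin f1 f2 (@wedge_lift bool _ _ true y) = f1 y.
Proof.
move=> E; rewrite /wjoin wedge_lift_funE //.
by move=> [] [].
Qed.
Lemma wjoin_liftF (X1 X2 Y : ptopologicalType) (f1 : X1 -> Y) (f2 : X2 -> Y) (y : X2) :
  f1 point = f2 point -> wjoin f1 f2 (@wedge_lift bool _ _ false y) = f2 y.
Proof.
move=> E; rewrite /wjoin wedge_lift_funE //.
by move=> [] [].
Qed.
Lemma wedge_cases (X1 X2 : ptopologicalType) (x : wedge2 X1 X2) :
  (exists y : X1, x = @wedge_lift bool _ _ true y) \/ (exists y : X2, x = @wedge_lift bool _ _ false y).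
Proof.
rewrite -[x](@reprK _ (wedge2 X1 X2)); case: (repr x) => [[] y].
  by left; exists y.
by right; exists y.
Qed.
Lemma wedge_pointE (X1 X2 : ptopologicalType) :
  (@point (wedge2 X1 X2)) = @wedge_lift bool _ _ true point.
Proof.
exact: (@wedge_liftE bool (fun b : bool => if b then X1 else X2) (fun b => @point (if b then X1 else X2)) true point (@point bool) point).
Qed.

Lemma lc_of_compact (X : topologicalType) : compact [set: X] -> locally_compact [set: X].
Proof.
move=> c x _; exists setT; first exact: filterT.
by split => //; exact: closedT.
Qed.

Lemma wjoin_cont (X1 X2 Y : ptopologicalType) (T : topologicalType) (A : set T)
  (h1 : T -> {compact-open, X1 -> Y}) (h2 : T -> {compact-open, X2 -> Y}) :
  compact [set: X1] -> compact [set: X2] -> hausdorff_space X1 -> hausdorff_space X2 ->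
  {within A, continuous h1} -> {within A, continuous h2} ->
  (forall t, A t -> based_map (h1 t) /\ based_map (h2 t)) ->
  {within A, continuous (fun t => (wjoin (h1 t) (h2 t) : {compact-open, wedge2 X1 X2 -> Y}))}.
Proof.
move=> cX1 cX2 hX1 hX2 ch1 ch2 hb.
pose h1' (t : subspace A) : {compact-open, X1 -> Y} := if `[< A t >] then h1 t else cstmap X1 Y.
pose h2' (t : subspace A) : {compact-open, X2 -> Y} := if `[< A t >] then h2 t else cstmap X2 Y.
have c1 : continuous h1'.
  apply: (subspace_eq_continuous _ ch1) => t; rewrite inE => At.
  by rewrite /h1' asboolT.
have c2 : continuous h2'.
  apply: (subspace_eq_continuous _ ch2) => t; rewrite inE => At.
  by rewrite /h2' asboolT.
have pc1 : forall t, continuous (h1' t).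
  move=> t; rewrite /h1'; case: asboolP => At; last exact: cst_continuous.
  by case: (hb t At) => -[].
have pc2 : forall t, continuous (h2' t).
  move=> t; rewrite /h2'; case: asboolP => At; last exact: cst_continuous.
  by case: (hb t At) => _ [].
have u1 : continuous (uncurry (h1' : subspace A -> X1 -> Y)).
  apply: continuous_uncurry => //; exact: lc_of_compact.
have u2 : continuous (uncurry (h2' : subspace A -> X2 -> Y)).
  apply: continuous_uncurry => //; exact: lc_of_compact.
pose k : forall b : bool, subspace A -> (if b then X1 else X2) -> Y :=
  fun b => if b return subspace A -> (if b then X1 else X2) -> Y then h1' else h2'.
have J := @wedge_fun_joint_continuous bool (fun b : bool => if b then X1 else X2)
   (fun b => @point (if b then X1 else X2)) (subspace A) Y k finite_finset.
have cl : forall b : bool, closed [set @point (if b then X1 else X2)].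
  by case; apply: accessible_closed_set1; apply: hausdorff_accessible.
have kE : forall t (x y : bool), k x t point = k y t point.
  move=> t [] [] //=; rewrite /h1' /h2'; case: asboolP => At //.
  - by case: (hb t At) => -[_ ->] [_ ->].
  - by case: (hb t At) => -[_ ->] [_ ->].
have kc : forall x : bool, continuous (uncurry (k x)) by case.
have H : continuous (curry (uncurry (fun t : subspace A => wedge_fun (k^~ t)))
   : subspace A -> {compact-open, wedge2 X1 X2 -> Y}).
  exact: (continuous_curry_fun (J cl kE kc)).
apply: (subspace_eq_continuous _ H) => t; rewrite inE => At.
rewrite /curry /=; rewrite /wjoin; congr wedge_fun.
apply: functional_extensionality_dep => -[] /=.
  by rewrite /h1' asboolT.
by rewrite /h2' asboolT.
Qed.

Lemma coef_nil (T G : Type) (P : T -> G -> Prop) g : coef P [::] g = 0.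
Proof. by rewrite /coef big_nil. Qed.

Lemma coef_cons (T G : Type) (P : T -> G -> Prop) x s g :
  coef P (x :: s) g = (if `[< P x.2 g >] then x.1 else 0) + coef P s g.
Proof. by rewrite /coef big_cons. Qed.

Lemma coef_cat (T G : Type) (P : T -> G -> Prop) s t g :
  coef P (s ++ t) g = coef P s g + coef P t g.
Proof. by rewrite /coef big_cat. Qed.

Lemma coef_neg (T G : Type) (P : T -> G -> Prop) s g :
  coef P (fs_neg s) g = - coef P s g.
Proof.
elim: s => [|x s IH]; first by rewrite /fs_neg /= !coef_nil oppr0.
rewrite /fs_neg /= !coef_cons /= -/(fs_neg s) IH opprD.
by case: ifP => _; rewrite ?oppr0.
Qed.

Lemma coef_map1 (T2 T G G2 : Type) (P : T -> G -> Prop) (P2 : T2 -> G2 -> Prop)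
  (J : T2 -> T) (b : Prop) (c : int) (s2 : seq (int * T2)) g g2 :
  (forall q, List.In q s2 -> (P (J q.2) g <-> b /\ P2 q.2 g2)) ->
  coef P [seq (c * q.1, J q.2) | q <- s2] g = (if `[< b >] then c else 0) * coef P2 s2 g2.
Proof.
elim: s2 => [|q s2 IH] H; first by rewrite /= !coef_nil mulr0.
rewrite /= !coef_cons /= IH; last by move=> q' Hq'; apply: H; right.
rewrite (asbool_equiv_eq (H q (or_introl erefl))) asbool_and.
by case: `[< b >]; case: `[< P2 q.2 g2 >] => /=; ring.
Qed.

Lemma coef_prod (T1 T2 T G G1 G2 : Type) (P : T -> G -> Prop) (P1 : T1 -> G1 -> Prop)
  (P2 : T2 -> G2 -> Prop) (J : T1 -> T2 -> T) (s1 : seq (int * T1)) (s2 : seq (int * T2)) g g1 g2 :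
  (forall p q, List.In p s1 -> List.In q s2 -> (P (J p.2 q.2) g <-> P1 p.2 g1 /\ P2 q.2 g2)) ->
  coef P [seq (p.1 * q.1, J p.2 q.2) | p <- s1, q <- s2] g = coef P1 s1 g1 * coef P2 s2 g2.
Proof.
elim: s1 => [|p s1 IH] H; first by rewrite /= !coef_nil mul0r.
rewrite allpairs_cons coef_cat coef_cons IH; last by move=> ? ? ?; apply: H; right.
rewrite (@coef_map1 _ _ _ _ P P2 (J p.2) (P1 p.2 g1) p.1 s2 g g2); last first.
  by move=> q Hq; apply: H => //; left.
by rewrite mulrDl.
Qed.

Lemma In_map (A B : Type) (f : A -> B) (t : seq A) z :
  List.In z [seq f y | y <- t] -> exists y, List.In y t /\ z = f y.
Proof.
elim: t => [|y t IH] //= [<-|/IH [y' [H1 H2]]]; first by exists y; split => //; left.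
by exists y'; split => //; right.
Qed.

Lemma In_cat (A : Type) (s t : seq A) z :
  List.In z (s ++ t) -> List.In z s \/ List.In z t.
Proof.
elim: s => [|x s IH] /=; first by right.
by case=> [<-|/IH [H|H]]; [left; left|left; right|right].
Qed.

Lemma In_allpairs (A B C : Type) (f : A -> B -> C) s t z :
  List.In z [seq f x y | x <- s, y <- t] -> exists x y, [/\ List.In x s, List.In y t & z = f x y].
Proof.
elim: s => [|x s IH] //; rewrite allpairs_cons => Hz. case: (In_cat Hz) => [|/IH].
  by move=> H; case: (In_map H) => y [Hy ->]; exists x, y; split => //; left.
by move=> [x' [y' [H1 H2 H3]]]; exists x', y'; split => //; right.
Qed.

Lemma In_map_filter (A B : Type) (f : A -> B) (P : pred A) (s : seq A) b :
  List.In b [seq f a | a <- s & P a] <-> exists a, [/\ List.In a s, P a & b = f a].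
Proof.
elim: s => [|a s IH] /=; first by split => // -[? []].
case: ifP => Pa /=; split.
- case=> [<-|/IH [a' [H1 H2 H3]]]; first by exists a; split => //; left.
  by exists a'; split => //; right.
- case=> a' [[<-|H1] H2 H3]; first by left.
  by right; apply/IH; exists a'.
- by move=> /IH [a' [H1 H2 H3]]; exists a'; split => //; right.
- case=> a' [[E|H1] H2 H3]; first by rewrite -E Pa in H2.
  by apply/IH; exists a'.
Qed.

Definition comb (E : finType) (V : Type) (v0 : V) (l : seq {set E})
    (s : seq (int * (Simp E -> V))) : seq (int * (Simp E -> V)) :=
  foldr (fun (F : {set E}) (acc : seq (int * (Simp E -> V))) => [seq (p.1 * q.1, Defs.glue F p.2 q.2) | p <- s, q <- acc])
        [:: (1, fun _ => v0)] l.

Lemma coef_glue (E : finType) (V : Type) (U : set (Simp E)) (F : {set E})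
   (s t : seq (int * (Simp E -> V))) g :
  coef (agree_on U) [seq (p.1 * q.1, Defs.glue F p.2 q.2) | p <- s, q <- t] g =
  coef (agree_on (U `&` face F)) s g * coef (agree_on (U `&` ~` face F)) t g.
Proof.
apply: coef_prod => p q _ _; rewrite /agree_on /Defs.glue; split.
  move=> H; split => x [Ux Fx]; have := H x Ux.
    by rewrite asboolT.
  by rewrite asboolF.
by move=> [H1 H2] x Ux; case: asboolP => Fx; [apply: H1|apply: H2].
Qed.

Lemma combE (E : finType) (V : Type) (v0 : V) (A : {set {set E}}) (s : seq (int * (Simp E -> V))) : combine v0 A s = comb v0 (enum A) s.
Proof. by []. Qed.

Definition liftT (X1 X2 : ptopologicalType) : X1 -> wedge2 X1 X2 := @wedge_lift bool _ _ true.
Definition liftF (X1 X2 : ptopologicalType) : X2 -> wedge2 X1 X2 := @wedge_lift bool _ _ false.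
Arguments liftT : clear implicits.
Arguments liftF : clear implicits.

Lemma wjoin_cst (X1 X2 Y : ptopologicalType) :
  wjoin (cstmap X1 Y) (cstmap X2 Y) = cstmap (wedge2 X1 X2) Y.
Proof.
apply: funext => x; case: (wedge_cases x) => -[y ->].
  by rewrite wjoin_liftT.
by rewrite wjoin_liftF.
Qed.

Lemma wjoin_eq (X1 X2 Y : ptopologicalType) (f1 : X1 -> Y) (f2 : X2 -> Y) (h : wedge2 X1 X2 -> Y) :
  f1 point = f2 point ->
  (wjoin f1 f2 = h <-> f1 = h \o liftT X1 X2 /\ f2 = h \o liftF X1 X2).
Proof.
move=> E; split.
  move=> <-; split; apply: funext => y /=; rewrite /liftT /liftF.
    by rewrite wjoin_liftT.
  by rewrite wjoin_liftF.
move=> [H1 H2]; apply: funext => x; case: (wedge_cases x) => -[y ->].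
  by rewrite wjoin_liftT // H1.
by rewrite wjoin_liftF // H2.
Qed.

Lemma based_wjoin (X1 X2 Y : ptopologicalType) (f1 : X1 -> Y) (f2 : X2 -> Y) :
  based_map f1 -> based_map f2 -> based_map (wjoin f1 f2).
Proof.
move=> [c1 p1] [c2 p2]; split.
  apply: wedge_fun_continuous; first by case.
  by move=> [] [] //=; rewrite p1 p2.
by rewrite wedge_pointE wjoin_liftT // p1 p2.
Qed.

Lemma path_comp_based (X Y : ptopologicalType) (a f : X -> Y) :
  path_comp a f -> based_map f.
Proof.
move=> [g [_ _ <- H]]; apply: H.
by rewrite /= in_itv /= lexx ler01.
Qed.

Lemma path_comp_join (X1 X2 Y : ptopologicalType) (f1 : X1 -> Y) (f2 : X2 -> Y) :
  compact [set: X1] -> compact [set: X2] -> hausdorff_space X1 -> hausdorff_space X2 ->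
  path_comp (cstmap X1 Y) f1 -> path_comp (cstmap X2 Y) f2 ->
  path_comp (cstmap (wedge2 X1 X2) Y) (wjoin f1 f2).
Proof.
move=> cX1 cX2 hX1 hX2 [g1 [cg1 g10 g11 b1]] [g2 [cg2 g20 g21 b2]].
exists (fun s => wjoin (g1 s) (g2 s) : {compact-open, wedge2 X1 X2 -> Y}); split.
- by apply: wjoin_cont => // t Ht; split; [apply: b1|apply: b2].
- by rewrite g10 g20 wjoin_cst.
- by rewrite g11 g21.
- by move=> t Ht; apply: based_wjoin; [apply: b1|apply: b2].
Qed.

Lemma agree_join (X1 X2 Y : ptopologicalType) (E : finType) (U : set (Simp E))
  (p : Simp E -> X1 -> Y) (q : Simp E -> X2 -> Y) (g : Simp E -> wedge2 X1 X2 -> Y) :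
  (forall t, U t -> p t point = q t point) ->
  (agree_on U (fun t => wjoin (p t) (q t)) g <->
   agree_on U p (fun t => g t \o liftT X1 X2) /\ agree_on U q (fun t => g t \o liftF X1 X2)).
Proof.
move=> H; split.
  move=> A; split => t Ut; have := (wjoin_eq (g t) (H t Ut)).1 (A t Ut); by case.
by move=> [A1 A2] t Ut; apply/(wjoin_eq (g t) (H t Ut)); split; [apply: A1|apply: A2].
Qed.

Lemma comb_fact (X1 X2 Y : ptopologicalType) (E : finType)
  (S1 : seq (int * (Simp E -> {compact-open, X1 -> Y})))
  (S2 : seq (int * (Simp E -> {compact-open, X2 -> Y})))
  (l : seq {set E}) (U : set (Simp E)) (g : Simp E -> {compact-open, wedge2 X1 X2 -> Y}) :
  (forall p, List.In p S1 -> forall t, simplex t -> p.2 t point = point) ->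
  (forall p, List.In p S2 -> forall t, simplex t -> p.2 t point = point) ->
  U `<=` @simplex E ->
  coef (agree_on U) (comb (cstmap (wedge2 X1 X2) Y : {compact-open, wedge2 X1 X2 -> Y}) l
     [seq (p.1 * q.1, (fun t => wjoin (p.2 t) (q.2 t)) : Simp E -> {compact-open, wedge2 X1 X2 -> Y})
        | p <- S1, q <- S2]) g
  = coef (agree_on U) (comb (cstmap X1 Y : {compact-open, X1 -> Y}) l S1) (fun t => g t \o liftT X1 X2)
    * coef (agree_on U) (comb (cstmap X2 Y : {compact-open, X2 -> Y}) l S2) (fun t => g t \o liftF X1 X2).
Proof.
move=> H1 H2; elim: l U => [|F l IH] U HU.
  rewrite /= -wjoin_cst.
  have -> : [:: ((1 : int), fun _ : Simp E => wjoin (cstmap X1 Y) (cstmap X2 Y) : {compact-open, wedge2 X1 X2 -> Y})]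
     = [seq (p.1 * q.1, (fun t => wjoin (p.2 t) (q.2 t)) : Simp E -> {compact-open, wedge2 X1 X2 -> Y})
        | p <- [:: ((1 : int), fun _ : Simp E => cstmap X1 Y : {compact-open, X1 -> Y})],
          q <- [:: ((1 : int), fun _ : Simp E => cstmap X2 Y : {compact-open, X2 -> Y})]].
    by rewrite /= mulr1.
  by apply: (coef_prod (J := fun (a : Simp E -> {compact-open, X1 -> Y}) (b : Simp E -> {compact-open, X2 -> Y}) => (fun t => wjoin (a t) (b t)) : Simp E -> {compact-open, wedge2 X1 X2 -> Y})) => p q [<-|//] [<-|//]; apply: agree_join.
rewrite /= !coef_glue IH; last by move=> t [Ut _]; apply: HU.
rewrite -!/(comb _ l _).
rewrite (coef_prod (J := fun (a : Simp E -> {compact-open, X1 -> Y}) (b : Simp E -> {compact-open, X2 -> Y}) => (fun t => wjoin (a t) (b t)) : Simp E -> {compact-open, wedge2 X1 X2 -> Y}) (P1 := agree_on (U `&` face F)) (P2 := agree_on (U `&` face F)) (g1 := fun t => g t \o liftT X1 X2) (g2 := fun t => g t \o liftF X1 X2)); last first.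
  move=> p q Hp Hq; apply: agree_join => t [Ut _].
  by rewrite (H1 p Hp t (HU t Ut)) (H2 q Hq t (HU t Ut)).
ring.
Qed.

Definition qsplit1 (E : finType) (X1 X2 : ptopologicalType) (q : seq (Simp E * wedge2 X1 X2))
  : seq (Simp E * X1) :=
  [seq (j.1, xget point [set y : X1 | liftT X1 X2 y = j.2]) | j <- q &
     `[< exists y : X1, liftT X1 X2 y = j.2 >]].
Definition qsplit2 (E : finType) (X1 X2 : ptopologicalType) (q : seq (Simp E * wedge2 X1 X2))
  : seq (Simp E * X2) :=
  [seq (j.1, xget point [set y : X2 | liftF X1 X2 y = j.2]) | j <- q &
     `[< exists y : X2, liftF X1 X2 y = j.2 >]].

Lemma size_qsplit1 (E : finType) (X1 X2 : ptopologicalType) (q : seq (Simp E * wedge2 X1 X2)) :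
  (size (qsplit1 q) <= size q)%N.
Proof. by rewrite /qsplit1 size_map size_filter count_size. Qed.
Lemma size_qsplit2 (E : finType) (X1 X2 : ptopologicalType) (q : seq (Simp E * wedge2 X1 X2)) :
  (size (qsplit2 q) <= size q)%N.
Proof. by rewrite /qsplit2 size_map size_filter count_size. Qed.

Lemma In_qsplit1 (E : finType) (X1 X2 : ptopologicalType) (q : seq (Simp E * wedge2 X1 X2)) j' :
  List.In j' (qsplit1 q) -> exists j, List.In j q /\ j'.1 = j.1 /\ liftT X1 X2 j'.2 = j.2.
Proof.
move=> /In_map_filter [j [Hj /asboolP Hex ->]]; exists j; split => //; split => //=.
by have := xgetPex point Hex.
Qed.
Lemma In_qsplit2 (E : finType) (X1 X2 : ptopologicalType) (q : seq (Simp E * wedge2 X1 X2)) j' :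
  List.In j' (qsplit2 q) -> exists j, List.In j q /\ j'.1 = j.1 /\ liftF X1 X2 j'.2 = j.2.
Proof.
move=> /In_map_filter [j [Hj /asboolP Hex ->]]; exists j; split => //; split => //=.
by have := xgetPex point Hex.
Qed.

Lemma wr_split (E : finType) (X1 X2 Y : ptopologicalType) (W : Simp E -> wedge2 X1 X2 -> Y)
  (W1 : Simp E -> X1 -> Y) (W2 : Simp E -> X2 -> Y) (q : seq (Simp E * wedge2 X1 X2))
  (g : Simp E * wedge2 X1 X2 -> Y) :
  (forall j, List.In j q -> forall y, W j.1 (liftT X1 X2 y) = W1 j.1 y) ->
  (forall j, List.In j q -> forall y, W j.1 (liftF X1 X2 y) = W2 j.1 y) ->
  (wr_agree q W g <-> wr_agree (qsplit1 q) W1 (fun j => g (j.1, liftT X1 X2 j.2)) /\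
                      wr_agree (qsplit2 q) W2 (fun j => g (j.1, liftF X1 X2 j.2))).
Proof.
move=> H1 H2; split.
  move=> H; split => j' Hj'.
    have [[u x] [Hj [/= E1 E2]]] := In_qsplit1 Hj'.
    by rewrite E1 E2 -(H _ Hj) /= -E2 (H1 _ Hj).
  have [[u x] [Hj [/= E1 E2]]] := In_qsplit2 Hj'.
  by rewrite E1 E2 -(H _ Hj) /= -E2 (H2 _ Hj).
move=> [A1 A2] [u x] Hj /=; case: (wedge_cases x) => -[y Ex].
  have Hex : exists y, liftT X1 X2 y = x by exists y.
  have Hin : List.In (u, xget point [set y : X1 | liftT X1 X2 y = x]) (qsplit1 q).
    by apply/In_map_filter; exists (u, x); split => //; apply/asboolP.
  have Hy := xgetPex point Hex.
  have := A1 _ Hin; rewrite /= Hy => <-.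
  by rewrite -(H1 _ Hj) /= Hy.
have Hex : exists y, liftF X1 X2 y = x by exists y.
have Hin : List.In (u, xget point [set y : X2 | liftF X1 X2 y = x]) (qsplit2 q).
  by apply/In_map_filter; exists (u, x); split => //; apply/asboolP.
have Hy := xgetPex point Hex.
have := A2 _ Hin; rewrite /= Hy => <-.
by rewrite -(H2 _ Hj) /= Hy.
Qed.

Theorem corollary7p3 (X1 X2 Y : ptopologicalType) (r : nat)
    (a1 : X1 -> Y) (a2 : X2 -> Y) :
  cellular X1 -> cellular X2 -> cellular Y ->
  compact [set: X1]%classic -> compact [set: X2]%classic ->
  based_map a1 -> based_map a2 ->
  strongly_similar r (cstmap X1 Y) a1 ->
  strongly_similar r (cstmap X2 Y) a2 ->
  forall c : wedge2 X1 X2 -> Y,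
    (forall x : X1, c (@wedge_lift bool _ _ true x) = a1 x) ->
    (forall x : X2, c (@wedge_lift bool _ _ false x) = a2 x) ->
    strongly_similar r (cstmap (wedge2 X1 X2) Y) c.
Proof.
move=> [hX1 _] [hX2 _] _ cX1 cX2 ba1 ba2 sim1 sim2 c cT cF E E0.
have [S1 [HS1 fS1 iS1]] := sim1 E E0.
have [S2 [HS2 fS2 iS2]] := sim2 E E0.
have bS1 : forall p, List.In p S1 -> forall t, simplex t -> based_map (p.2 t).
  by move=> p Hp t St; apply: path_comp_based; exact: (HS1 p Hp).2 t St.
have bS2 : forall p, List.In p S2 -> forall t, simplex t -> based_map (p.2 t).
  by move=> p Hp t St; apply: path_comp_based; exact: (HS2 p Hp).2 t St.
have pS1 : forall p, List.In p S1 -> forall t, simplex t -> p.2 t point = point.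
  by move=> p Hp t St; case: (bS1 p Hp t St).
have pS2 : forall p, List.In p S2 -> forall t, simplex t -> p.2 t point = point.
  by move=> p Hp t St; case: (bS2 p Hp t St).
pose J := fun (a : Simp E -> {compact-open, X1 -> Y}) (b : Simp E -> {compact-open, X2 -> Y}) =>
  (fun t => wjoin (a t) (b t)) : Simp E -> {compact-open, wedge2 X1 X2 -> Y}.
exists [seq (p.1 * q.1, J p.2 q.2) | p <- S1, q <- S2]; split.
- move=> z Hz; case: (In_allpairs Hz) => p [q [Hp Hq ->]] /=; split.
    apply: wjoin_cont => //; [exact: (HS1 p Hp).1|exact: (HS2 q Hq).1|].
    by move=> t St; split; [apply: bS1|apply: bS2].
  move=> t St; apply: path_comp_join => //; [exact: (HS1 p Hp).2 t St|exact: (HS2 q Hq).2 t St].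
- move=> A lA g.
  have HL : layout_space A `<=` @simplex E by move=> t [F _ [St _]].
  rewrite combE /J comb_fact //.
  rewrite (coef_prod (J := J) (P1 := agree_on (layout_space A)) (P2 := agree_on (layout_space A))
     (g1 := fun t => g t \o liftT X1 X2) (g2 := fun t => g t \o liftF X1 X2)); last first.
    move=> p q Hp Hq; apply: agree_join => t Lt.
    by rewrite (pS1 p Hp t (HL t Lt)) (pS2 q Hq t (HL t Lt)).
  by rewrite (fS1 A lA) (fS2 A lA) !combE.
- move=> q Hq Sq g.
  have h1 := iS1 (qsplit1 q) (leq_ltn_trans (size_qsplit1 q) Hq)
    (fun j Hj => match In_qsplit1 Hj with ex_intro j0 (conj H0 (conj E1 _)) => ltac:(rewrite E1; exact: Sq j0 H0) end)
    (fun j => g (j.1, liftT X1 X2 j.2)).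
  have h2 := iS2 (qsplit2 q) (leq_ltn_trans (size_qsplit2 q) Hq)
    (fun j Hj => match In_qsplit2 Hj with ex_intro j0 (conj H0 (conj E1 _)) => ltac:(rewrite E1; exact: Sq j0 H0) end)
    (fun j => g (j.1, liftF X1 X2 j.2)).
  move: h1 h2; rewrite !coef_cons !coef_neg /=.
  move=> /eqP; rewrite subr_eq0 => /eqP e1.
  move=> /eqP; rewrite subr_eq0 => /eqP e2.
  rewrite (coef_prod (J := J) (P1 := wr_agree (qsplit1 q)) (P2 := wr_agree (qsplit2 q))
     (g1 := fun j => g (j.1, liftT X1 X2 j.2)) (g2 := fun j => g (j.1, liftF X1 X2 j.2))); last first.
    move=> p p' Hp Hp'; apply: wr_split => j Hj y; rewrite /J.
      by rewrite /liftT wjoin_liftT // (pS1 p Hp _ (Sq j Hj)) (pS2 p' Hp' _ (Sq j Hj)).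
    by rewrite /liftF wjoin_liftF // (pS1 p Hp _ (Sq j Hj)) (pS2 p' Hp' _ (Sq j Hj)).
  rewrite -e1 -e2.
  rewrite (asbool_equiv_eq (wr_split (W1 := fun _ => a1) (W2 := fun _ => a2) g _ _)) ?asbool_and.
  - by case: `[< _ >]; case: `[< _ >]; rewrite /=; ring.
  - by move=> j _ y; exact: cT.
  - by move=> j _ y; exact: cF.
Qed.
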